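(* Let $\lambda\neq 0$ and $F(t)=F(t;\lambda)=\frac{1}{(1+t)^{\lambda}+1}$. Then for every positive integer $N$, $$\left(\frac{d}{dt}\right)^N F(t)=\frac{(-1)^N\lambda}{(1+t)^N}\sum_{i=1}^{N+1}a_{i-1}(N;\lambda)F(t)^i,$$ where $a_0(N;\lambda)=(N+\lambda-1)_{N-1}$, $a_N(N;\lambda)=(-1)^N\lambda^{N-1}N!$, and for $1\le j\le N-1$, $$a_j(N;\lambda)=(-1)^j j!\,\lambda^j\sum_{i_j=0}^{N-j}\sum_{i_{j-1}=0}^{N-j-i_j}\cdots\sum_{i_1=0}^{N-j-i_j-\cdots-i_2}\ \prod_{\ell=1}^{j}\Bigl(N+(\ell+1)\lambda-(i_j+\cdots+i_{\ell+1})-(j-\ell)-1\Bigr)_{i_\ell}\cdot\Bigl(N+\lambda-S-j-1\Bigr)_{N-S-j-1},$$ with $S=i_1+\cdots+i_j$ (the empty sum $i_j+\cdots+i_{j+1}$ being $0$). Explicitly, the product is $(N+(j+1)\lambda-1)_{i_j}(N+j\lambda-i_j-2)_{i_{j-1}}\cdots(N+2\lambda-i_j-\cdots-i_2-j)_{i_1}$.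
   Context: $(x)_n=x(x-1)\cdots(x-n+1)$ for $n\ge1$, $(x)_0=1$, and, for the boundary terms where the index equals $-1$, $(x)_{-1}=\frac{1}{x+1}$ (so that e.g. $(\lambda-1)_{-1}=1/\lambda$). *)

(* Defs.v *)
From Stdlib Require Import Reals ZArith List.
From Coquelicot Require Import Coquelicot.
Open Scope R_scope.

(* F(t; lambda) = 1 / ((1+t)^lambda + 1), meaningful for t > -1. *)
Definition F (lam t : R) : R := / (Rpower (1 + t) lam + 1).

Fixpoint ffn (x : R) (n : nat) : R :=
  match n with
  | O => 1
  | S n' => ffn x n' * (x - INR n')
  end.

(* falling factorial with integer index; (x)_{-1} = 1/(x+1).
   Only the indices >= -1 occur in the statement. *)
Definition ffz (x : R) (k : Z) : R :=
  if (k <? 0)%Z then / (x + 1) else ffn x (Z.to_nat k).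

Fixpoint prod1 (n : nat) (f : nat -> R) : R :=
  match n with
  | O => 1
  | S n' => prod1 n' f * f n
  end.

(* Nested sum: nsum k b f =
   sum_{x_1=0}^{b} sum_{x_2=0}^{b-x_1} ... sum_{x_k=0}^{b-x_1-...-x_{k-1}} f [x_1;...;x_k].
   In a_j, x_1 = i_j (outermost), ..., x_j = i_1 (innermost). *)
Fixpoint nsum (k : nat) (b : nat) (f : list nat -> R) : R :=
  match k with
  | O => f nil
  | S k' => sum_n (fun i => nsum k' (b - i) (fun l => f (i :: l))) b
  end.

Fixpoint lsum (l : list nat) : nat :=
  match l with nil => O | x :: l' => (x + lsum l')%nat end.

(* summand of a_j for index list l = [i_j; i_{j-1}; ...; i_1] *)
Definition aterm (N j : nat) (lam : R) (l : list nat) : R :=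
  let i := fun ell : nat => nth (j - ell) l O in
  let tail := fun ell : nat => lsum (firstn (j - ell) l) in (* i_j+...+i_{ell+1} *)
  let S := lsum l in
  prod1 j (fun ell =>
     ffn (INR N + INR (ell + 1) * lam - INR (tail ell) - INR (j - ell) - 1) (i ell))
  * ffz (INR N + lam - INR S - INR j - 1)
        (Z.of_nat N - Z.of_nat S - Z.of_nat j - 1)%Z.

Definition a (j N : nat) (lam : R) : R :=
  if Nat.eqb j 0 then ffn (INR N + lam - 1) (N - 1)
  else if Nat.eqb j N then (-1) ^ N * lam ^ (N - 1) * INR (fact N)
  else (-1) ^ j * INR (fact j) * lam ^ j * nsum j (N - j) (aterm N j lam).

(* Main.v *)
Require Import Defs.
From Stdlib Require Import Reals ZArith List Lia Lra.
From Coquelicot Require Import Coquelicot.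
Open Scope R_scope.
From Stdlib Require Import Lia Lra.

Fixpoint pe (c : nat -> R) (m : nat) (x : R) : R :=
  match m with
  | O => c O * x
  | S m' => pe c m' x + c m * x ^ (S m)
  end.

Fixpoint pd (c : nat -> R) (m : nat) (x : R) : R :=
  match m with
  | O => c O
  | S m' => pd c m' x + INR (S m) * c m * x ^ m
  end.

Lemma dF lam t : -1 < t ->
  is_derive (F lam) t (- lam / (1+t) * (F lam t - F lam t ^ 2)).
Proof.
  intro Ht. unfold F, Rpower.
  auto_derive.
  - assert (0 < exp (lam * ln (1+t))) by apply exp_pos.
    repeat split; lra.
  - assert (0 < exp (lam * ln (1+t))) by apply exp_pos.
    field. split; lra.
Qed.

Lemma dpe lam c m t : -1 < t ->
  is_derive (fun y => pe c m (F lam y)) t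
    (pd c m (F lam t) * (- lam / (1+t) * (F lam t - F lam t ^ 2))).
Proof.
  intro Ht. induction m as [|m IH].
  - simpl. eapply is_derive_ext. intro; reflexivity.
    replace (c 0%nat * (- lam / (1+t) * (F lam t - F lam t ^ 2)))
      with (c 0%nat * (- lam / (1+t) * (F lam t - F lam t ^ 2))) by ring.
    apply is_derive_scal. apply dF; auto.
  - assert (H2 : is_derive (fun y => c (S m) * F lam y ^ S (S m)) t
       (c (S m) * (INR (S (S m)) * (- lam / (1+t) * (F lam t - F lam t ^ 2)) * F lam t ^ Init.Nat.pred (S (S m))))).
    { apply is_derive_scal. apply is_derive_pow. apply dF; auto. }
    assert (H := is_derive_plus _ _ _ _ _ IH H2).
    eapply is_derive_ext. intro y. reflexivity.
    replace (pd c (S m) (F lam t) * (- lam / (1 + t) * (F lam t - F lam t ^ 2)))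
      with (plus (pd c m (F lam t) * (- lam / (1 + t) * (F lam t - F lam t ^ 2)))
       (c (S m) * (INR (S (S m)) * (- lam / (1+t) * (F lam t - F lam t ^ 2)) * F lam t ^ Init.Nat.pred (S (S m))))).
    exact H.
    unfold plus; simpl. change (INR (S (S m))) with (INR (S (S m))). 
    replace (Init.Nat.pred (S (S m))) with (S m) by reflexivity.
    unfold pd; fold pd. ring.
Qed.

Definition T lam j N := nsum j (N - j) (aterm N j lam).

Lemma nsum_ext k : forall b f g, (forall l, length l = k -> (lsum l <= b)%nat -> f l = g l) ->
  nsum k b f = nsum k b g.
Proof.
  induction k as [|k IH]; intros b f g H; simpl.
  - apply H; simpl; auto; lia.
  - apply sum_n_ext_loc. intros i Hi. apply IH. intros l Hl Hs.
    apply H; simpl; lia.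
Qed.

Lemma nsum_scal k : forall b c f, nsum k b (fun l => c * f l) = c * nsum k b f.
Proof.
  induction k as [|k IH]; intros b c f; simpl; auto.
  rewrite <- (sum_n_mult_l c). apply sum_n_ext. intro i. apply IH.
Qed.

Lemma prod1_ext n f g : (forall e, (1 <= e <= n)%nat -> f e = g e) -> prod1 n f = prod1 n g.
Proof.
  induction n as [|n IH]; intro H; simpl; auto.
  rewrite IH by (intros; apply H; lia). rewrite H by lia. reflexivity.
Qed.

Lemma aterm_cons N j lam i l : length l = j -> (i + 1 <= N)%nat ->
  aterm N (S j) lam (i::l) = ffn (INR N + INR (S j + 1) * lam - 1) i * aterm (N-i-1) j lam l.
Proof.
  intros Hl Hi. unfold aterm. simpl prod1.
  rewrite Nat.sub_diag. simpl nth. simpl firstn. simpl lsum.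
  replace (prod1 j _) with (prod1 j (fun ell : nat =>
      ffn (INR (N - i - 1) + INR (ell + 1) * lam - INR (lsum (firstn (j - ell) l)) -
          INR (j - ell) - 1) (nth (j - ell) l 0%nat))).
  2:{ apply prod1_ext. intros e He. destruct e as [|e]; [lia|].
      replace (j - e)%nat with (S (j - S e)) by lia.
      simpl nth. simpl firstn. simpl lsum. f_equal.
      rewrite ?plus_INR, ?S_INR. rewrite !minus_INR by lia. simpl. ring. }
  replace (INR N + lam - INR (i + lsum l) - INR (S j) - 1) with
     (INR (N - i - 1) + lam - INR (lsum l) - INR j - 1).
  2:{ rewrite ?plus_INR, ?S_INR. rewrite !minus_INR by lia. simpl. ring. }
  replace (Z.of_nat N - Z.of_nat (i + lsum l) - Z.of_nat (S j) - 1)%Z with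
     (Z.of_nat (N - i - 1) - Z.of_nat (lsum l) - Z.of_nat j - 1)%Z by lia.
  change (match (j + 1)%nat with 0%nat => 1 | S _ => INR (j + 1) + 1 end) with (INR (S (j+1))).
  change (S j + 1)%nat with (S (j+1)). rewrite INR_0.
  replace (INR N + INR (S (j+1)) * lam - 0 - 0 - 1) with (INR N + INR (S (j+1)) * lam - 1) by ring.
  ring.
Qed.

Lemma R1 N j lam : (S j <= N)%nat ->
  T lam (S j) N = sum_n (fun i => ffn (INR N + INR (S j + 1)*lam - 1) i * T lam j (N-i-1)) (N - S j).
Proof.
  intro H. unfold T. simpl nsum. apply sum_n_ext_loc. intros i Hi.
  rewrite <- nsum_scal. replace (N - S j - i)%nat with (N - i - 1 - j)%nat by lia.
  apply nsum_ext. intros l Hl Hs. apply aterm_cons; lia.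
Qed.

Lemma ffn_shift x n : ffn x (S n) = x * ffn (x - 1) n.
Proof.
  revert x; induction n as [|n IH]; intro x.
  - simpl. ring.
  - change (ffn x (S (S n))) with (ffn x (S n) * (x - INR (S n))).
    rewrite IH. simpl. destruct n; simpl; ring.
Qed.

Lemma sum_n_shift (a : nat -> R) m : sum_n a (S m) = a O + sum_n (fun i => a (S i)) m.
Proof.
  induction m as [|m IH].
  - rewrite sum_Sn, !sum_O. reflexivity.
  - rewrite sum_Sn, IH, (sum_Sn (fun i => a (S i))). unfold plus; simpl. ring.
Qed.

Lemma R2 N k lam : (1 <= k <= N)%nat ->
  T lam k (S N) = (INR N + INR (k+1) * lam) * T lam k N + T lam (k-1) N.
Proof.
  intro H. destruct k as [|j]; [lia|].
  rewrite R1 by lia. rewrite (R1 N) by lia.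
  replace (S N - S j)%nat with (S (N - S j)) by lia.
  rewrite sum_n_shift. simpl ffn at 1.
  replace (S N - 0 - 1)%nat with N by lia.
  replace (S j - 1)%nat with j by lia.
  rewrite <- (sum_n_mult_l (INR N + INR (S j + 1) * lam)).
  rewrite Rmult_1_l, Rplus_comm. f_equal.
  apply sum_n_ext. intro i. rewrite ffn_shift.
  replace (S N - S i - 1)%nat with (N - i - 1)%nat by lia.
  rewrite S_INR. set (q := INR (S j + 1)). unfold mult; simpl.
  replace (INR N + 1 + q * lam - 1 - 1) with (INR N + q * lam - 1) by ring.
  ring.
Qed.

Lemma TNN lam n : lam <> 0 -> T lam n n = / lam.
Proof.
  intro Hl. induction n as [|n IH].
  - unfold T, aterm. simpl. unfold ffz. simpl.
    replace (0 + lam - 0 - 0 - 1 + 1) with lam by ring. ring.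
  - rewrite R1 by lia. replace (S n - S n)%nat with O by lia. rewrite sum_O.
    replace (S n - 0 - 1)%nat with n by lia. rewrite IH. simpl. ring.
Qed.

Lemma T0 lam N : (1 <= N)%nat -> T lam 0 N = ffn (INR N + lam - 1) (N - 1).
Proof.
  intro H. unfold T, aterm. simpl nsum. simpl prod1. unfold ffz.
  replace (Z.of_nat N - 0 - 0 - 1 <? 0)%Z with false.
  2:{ symmetry. apply Z.ltb_ge. lia. }
  replace (Z.to_nat (Z.of_nat N - 0 - 0 - 1)) with (N - 1)%nat by lia.
  rewrite Rmult_1_l. f_equal; ring.
Qed.

Definition C lam N k := if (k <=? N)%nat then (-1)^k * INR (fact k) * lam^k * T lam k N else 0.

Lemma T0rec lam N : lam <> 0 -> T lam 0 (S N) = (INR N + lam) * T lam 0 N.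
Proof.
  intro Hl. destruct N as [|N].
  - rewrite T0 by lia. rewrite TNN by auto. simpl. field. auto.
  - rewrite !T0 by lia. replace (S (S N) - 1)%nat with (S (S N - 1)) by lia.
    rewrite ffn_shift. rewrite !S_INR. f_equal. ring. f_equal. ring.
Qed.

Lemma Crec lam N k : lam <> 0 -> (k <= S N)%nat ->
  C lam (S N) k = (INR N + lam * INR (k+1)) * C lam N k - lam * INR k * C lam N (k-1).
Proof.
  intros Hl Hk. unfold C.
  replace (k <=? S N)%nat with true by (symmetry; apply Nat.leb_le; lia).
  destruct k as [|k].
  - replace (0 <=? N)%nat with true by (symmetry; apply Nat.leb_le; lia).
    rewrite T0rec by auto. simpl. ring.
  - destruct (Nat.eq_dec k N) as [->|Hne].
    + replace (S N <=? N)%nat with false by (symmetry; apply Nat.leb_gt; lia).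
      replace (S N - 1)%nat with N by lia.
      rewrite Nat.leb_refl.
      rewrite !TNN by auto. rewrite fact_simpl, mult_INR. rewrite S_INR. simpl pow. field. auto.
    + replace (S k <=? N)%nat with true by (symmetry; apply Nat.leb_le; lia).
      replace (S k - 1)%nat with k by lia.
      replace (k <=? N)%nat with true by (symmetry; apply Nat.leb_le; lia).
      rewrite R2 by lia. replace (S k - 1)%nat with k by lia.
      rewrite fact_simpl, mult_INR, !plus_INR. simpl. ring.
Qed.

Lemma pe_ext c d m x : (forall k, (k <= m)%nat -> c k = d k) -> pe c m x = pe d m x.
Proof.
  induction m as [|m IH]; intro H; simpl.
  - rewrite H by lia. auto.
  - rewrite IH by (intros; apply H; lia). rewrite H by lia. auto.
Qed.

Lemma L1 c n lam x m :
  pe (fun k => (INR n + lam * INR (k+1)) * c k - lam * INR k * c (k-1)%nat) m x =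
  INR n * pe c m x + lam * x * pd c m x - lam * x^2 * pd c m x + lam * INR (m+1) * c m * x^(m+2).
Proof.
  induction m as [|m IH].
  - simpl. ring.
  - change (pe (fun k => (INR n + lam * INR (k+1)) * c k - lam * INR k * c (k-1)%nat) (S m) x)
      with (pe (fun k => (INR n + lam * INR (k+1)) * c k - lam * INR k * c (k-1)%nat) m x
            + ((INR n + lam * INR (S m + 1)) * c (S m) - lam * INR (S m) * c (S m - 1)%nat) * x ^ (S (S m))).
    rewrite IH. replace (S m - 1)%nat with m by lia.
    change (pe c (S m) x) with (pe c m x + c (S m) * x ^ (S (S m))).
    change (pd c (S m) x) with (pd c m x + INR (S (S m)) * c (S m) * x ^ (S m)).
    rewrite !plus_INR, !S_INR. replace (m + 2)%nat with (S (S m)) by lia.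
    replace (S m + 2)%nat with (S (S (S m))) by lia. simpl. ring.
Qed.

Lemma step lam N x : lam <> 0 ->
  pe (C lam (S N)) (S N) x = INR N * pe (C lam N) N x + lam * (x - x^2) * pd (C lam N) N x.
Proof.
  intro Hl.
  rewrite (pe_ext _ (fun k => (INR N + lam * INR (k+1)) * C lam N k - lam * INR k * C lam N (k-1)%nat))
    by (intros; apply Crec; auto).
  rewrite L1.
  assert (E : C lam N (S N) = 0).
  { unfold C. replace (S N <=? N)%nat with false by (symmetry; apply Nat.leb_gt; lia). auto. }
  change (pe (C lam N) (S N) x) with (pe (C lam N) N x + C lam N (S N) * x ^ (S (S N))).
  change (pd (C lam N) (S N) x) with (pd (C lam N) N x + INR (S (S N)) * C lam N (S N) * x ^ (S N)).
  rewrite E. ring.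
Qed.

Lemma main lam (Hl : lam <> 0) N : forall t, -1 < t ->
  Derive_n (F lam) N t = (-1)^N * lam * (/(1+t))^N * pe (C lam N) N (F lam t).
Proof.
  induction N as [|N IH]; intros t Ht.
  - simpl. unfold C. simpl. rewrite TNN by auto. field. auto.
  - simpl Derive_n at 1. apply is_derive_unique.
    set (g := fun y => (-1)^N * lam * (/(1+y))^N * pe (C lam N) N (F lam y)).
    apply (is_derive_ext_loc g).
    { assert (Hp : 0 < t + 1) by lra.
      exists (mkposreal _ Hp). intros y Hy. unfold g. rewrite IH; auto.
      unfold ball in Hy; simpl in Hy. unfold AbsRing_ball, abs, minus, plus, opp in Hy. simpl in Hy.
      apply Rabs_lt_between in Hy. lra. }
    assert (Hu : is_derive (fun y => / (1+y)) t (- (/(1+t))^2)).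
    { auto_derive. lra. field. lra. }
    assert (Hu2 := is_derive_pow _ N _ _ Hu).
    assert (Hs := is_derive_scal _ _ ((-1)^N * lam) _ Hu2).
    assert (Hm := is_derive_mult _ _ _ _ _ Hs (dpe lam (C lam N) N t Ht) ltac:(intros; apply Rmult_comm)).
    eapply is_derive_ext. { intro y. unfold g. reflexivity. }
    eapply is_derive_ext in Hm. 2:{ intro y. unfold mult; simpl. reflexivity. }
    match goal with |- is_derive _ _ ?v => replace v with (plus
       (mult (((-1)^N * lam) * (INR N * - (/ (1 + t)) ^ 2 * (/ (1 + t)) ^ Init.Nat.pred N))
          (pe (C lam N) N (F lam t)))
       (mult ((-1)^N * lam * (/ (1 + t)) ^ N)
          (pd (C lam N) N (F lam t) * (- lam / (1 + t) * (F lam t - F lam t ^ 2))))) end.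
    exact Hm.
    rewrite step by auto. unfold plus, mult; simpl.
    assert (E : INR N * (/ (1 + t) * (/ (1 + t) * 1)) * (/ (1 + t)) ^ Init.Nat.pred N = INR N * (/ (1 + t) * (/ (1 + t)) ^ N)).
    { destruct N; simpl; ring. }
    replace ((-1) ^ N * lam *
      (INR N * - (/ (1 + t) * (/ (1 + t) * 1)) * (/ (1 + t)) ^ Init.Nat.pred N))
     with (- ((-1) ^ N * lam) * (INR N * (/ (1 + t) * (/ (1 + t) * 1)) * (/ (1 + t)) ^ Init.Nat.pred N)) by ring.
    rewrite E. field. lra.
Qed.

Lemma sum_pe g x m : sum_n_m (fun i => g (i-1)%nat * x^i) 1 (S m) = pe g m x.
Proof.
  induction m as [|m IH].
  - rewrite sum_n_n. simpl. ring.
  - rewrite sum_n_Sm by lia. rewrite IH. unfold plus; simpl.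
    replace (m - 0)%nat with m by lia. reflexivity.
Qed.

Lemma aC lam N k : lam <> 0 -> (1 <= N)%nat -> (k <= N)%nat -> a k N lam = C lam N k.
Proof.
  intros Hl HN Hk. unfold a, C.
  replace (k <=? N)%nat with true by (symmetry; apply Nat.leb_le; lia).
  destruct (Nat.eqb_spec k 0) as [->|H0].
  - rewrite T0 by auto. simpl. ring.
  - destruct (Nat.eqb_spec k N) as [->|H1].
    + rewrite TNN by auto. destruct N as [|n]; [lia|]. replace (S n - 1)%nat with n by lia. simpl pow. field. auto.
    + unfold T. ring.
Qed.

Theorem theorem2 (lam : R) (Hlam : lam <> 0) (N : nat) (HN : (1 <= N)%nat)
  (t : R) (Ht : -1 < t) :
  Derive_n (F lam) N t =
  (-1) ^ N * lam / (1 + t) ^ N *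
  sum_n_m (fun i => a (i - 1) N lam * F lam t ^ i) 1 (N + 1).
Proof.
  rewrite main by auto. replace (N + 1)%nat with (S N) by lia.
  rewrite (sum_pe (fun k => a k N lam) (F lam t) N). rewrite (pe_ext (fun k => a k N lam) (C lam N)) by (intros; apply aC; auto).
  rewrite pow_inv. unfold Rdiv. ring.
Qed.
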